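(* $\displaystyle\mathfrak G^Q_{s_1s_2\cdots s_{n-1}}(z|\eta)=\sum_{j=0}^{n-1}(-1)^j(1-\eta_1)^jF^{(n-1)}_j.$
   Context: Fix $n\ge2$. With the convention $Q_n:=0$, for $0\le m\le i\le n$ put $F^{(i)}_m=\sum_{J\subset\{1,\dots,i\},|J|=m}\prod_{j\in J,\,j+1\notin J}(1-Q_j)\prod_{j\in J}z_j$. Let $s_i^{(\eta)}$ swap $\eta_i,\eta_{i+1}$, $x\ominus y=(x-y)/(1-y)$, and $D^Q_i=1+\frac{s_i^{(\eta)}-1}{\eta_{i+1}\ominus\eta_i}$ ($1\le i\le n-1$) acting on $\mathbb{Z}[Q_1,\dots,Q_{n-1}][z_1,\dots,z_n,\eta_1,\dots,\eta_n]$ (fixing $z,Q$). Let $\psi_i=\sum_{j=0}^i(-1)^j(1-\eta_{n-i})^jF^{(i)}_j$. The quantum double Grothendieck polynomials $\mathfrak G^Q_w(z|\eta)$, $w\in S_n$, are the unique family with $\mathfrak G^Q_{w_\circ}=\prod_{i=1}^{n-1}\psi_i$ and $D^Q_i\mathfrak G^Q_w=\mathfrak G^Q_{s_iw}$ if $s_iw<w$, $=\mathfrak G^Q_w$ if $s_iw>w$. *)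

(* Defs.v *)
From HB Require Import structures.
From mathcomp Require Import all_boot all_order all_algebra all_fingroup.
From mathcomp Require Import fraction.
From mathcomp Require Export mpoly.
Unset Printing Implicit Defensive.
Import Order.TTheory GRing.Theory Num.Theory.
Local Open Scope ring_scope.

(* Coefficient ring Z[Q_1,...,Q_{n-1}] : variable 'X_k (k : 'I_(n.-1)) is Q_{k+1}. *)
Definition Cring (n : nat) := {mpoly int[n.-1]}.

(* Main ring Z[Q][z_1..z_n, eta_1..eta_n]: over 'I_(n+n), index k-1 is z_k and
   index n+k-1 is eta_k. *)
Definition Pring (n : nat) := {mpoly (Cring n)[n + n]}.

(* Its fraction field (used only to state the operator D^Q_i, which involves a division). *)
Definition Kfield (n : nat) := {fraction (Pring n)}.

(* Q_j (1-based).  insub fails for j = n, which gives the convention Q_n = 0. *)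
Definition Qv (n j : nat) : Cring n :=
  if (1 <= j < n)%N then oapp (fun k : 'I_(n.-1) => 'X_k) 0 (insub j.-1) else 0.

Definition Xv (n k : nat) : Pring n :=
  oapp (fun i : 'I_(n + n) => 'X_i) 0 (insub k).

Definition zv (n j : nat) : Pring n := Xv n j.-1.
Definition etav (n j : nat) : Pring n := Xv n (n + j.-1).

Definition QP (n j : nat) : Pring n := (Qv n j)%:MP.

(* F^{(i)}_m = sum over J subset {1..i}, |J| = m, of
   prod_{j in J, j+1 notin J} (1 - Q_j) * prod_{j in J} z_j.
   J is encoded as a set of 'I_i, where a : 'I_i stands for j = a+1. *)
Definition Fpol (n i m : nat) : Pring n :=
  \sum_(J : {set 'I_i} | #|J| == m)
     ((\prod_(a in J | ~~ [exists b in J, val b == (val a).+1]) (1 - QP n (val a).+1))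
      * \prod_(a in J) zv n (val a).+1).

Definition psi (n i : nat) : Pring n :=
  \sum_(0 <= j < i.+1) (-1) ^+ j * (1 - etav n (n - i)) ^+ j * Fpol n i j.

Definition Gtop (n : nat) : Pring n := \prod_(1 <= i < n) psi n i.

(* s_i^{(eta)} : swap eta_i and eta_{i+1} (1 <= i <= n-1); fixes z and Q. *)
Definition eta_swap_perm (n i : nat) : 'S_(n + n) :=
  match insub (n + i.-1) , insub (n + i) with
  | Some a, Some b => tperm a b
  | _, _ => 1%g
  end.
Definition s_eta (n i : nat) (f : Pring n) : Pring n := msym (eta_swap_perm n i) f.

Definition toK (n : nat) (f : Pring n) : Kfield n := @FracField.tofrac (Pring n) f.
Arguments toK {n} f.

Definition ominus (n : nat) (x y : Kfield n) : Kfield n := (x - y) / (1 - y).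
Arguments ominus {n} x y.

Definition DQ (n i : nat) (f : Pring n) : Kfield n :=
  toK f + (toK (s_eta n i f) - toK f) / ominus (toK (etav n i.+1)) (toK (etav n i)).

(* Permutations of {1..n} are 'S_n acting on 'I_n (0-based: a : 'I_n stands for a+1). *)
Definition sref (n i : nat) : 'S_n :=
  match insub i.-1, insub i with
  | Some a, Some b => tperm a b
  | _, _ => 1%g
  end.

(* composition of permutations as functions: (u \o v)(x) = u (v x).
   In MathComp, (v * u)%g x = u (v x). *)
Definition pcomp (n : nat) (u v : 'S_n) : 'S_n := (v * u)%g.

Definition plength (n : nat) (w : 'S_n) : nat :=
  #|[set p : 'I_n * 'I_n | (p.1 < p.2)%N && (w p.2 < w p.1)%N]|.

Definition wlong (n : nat) : 'S_n := perm (@rev_ord_inj n).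

Definition cox (n : nat) : 'S_n :=
  foldr (fun i acc => pcomp n (sref n i) acc) 1%g (iota 1 n.-1).

Definition is_QDGroth (n : nat) (G : 'S_n -> Pring n) : Prop :=
  G (wlong n) = Gtop n /\
  forall i : nat, (1 <= i <= n.-1)%N -> forall w : 'S_n,
    ((plength n (pcomp n (sref n i) w) < plength n w)%N ->
        DQ n i (G w) = toK (G (pcomp n (sref n i) w))) /\
    ((plength n w < plength n (pcomp n (sref n i) w))%N ->
        DQ n i (G w) = toK (G w)).

(* Main.v *)
Require Import Defs.
From HB Require Import structures.
From mathcomp Require Import all_boot all_order all_algebra all_fingroup.
From mathcomp Require Import fraction mpoly.
From mathcomp Require Import zify ring.
Import GRing.Theory.
Local Open Scope ring_scope.

Lemma tperm_lt n (a b c d : 'I_n) : val b = (val a).+1 ->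
  (tperm a b d < tperm a b c)%N -> (d < c)%N \/ (c = a /\ d = b).
Proof.
move=> hab hlt.
have E : forall x : 'I_n, (nat_of_ord (tperm a b x) = if x == a then val b else if x == b then val a else val x).
  move=> x; case: tpermP => [->|->|/eqP h1 /eqP h2]; rewrite ?eqxx //.
    by case: eqP => // /(congr1 val) /=; rewrite hab; lia.
  by rewrite (negbTE h1) (negbTE h2).
case: (boolP ((c == a) && (d == b))) => [/andP[/eqP -> /eqP ->]|h]; first by right.
left; move: hlt h; rewrite !E -!val_eqE /=.
case: (val c =P val a); case: (val d =P val b);
case: (val d =P val a); case: (val c =P val b); 
rewrite /= -?[val a]/(nat_of_ord a) -?[val b]/(nat_of_ord b) -?[val c]/(nat_of_ord c) -?[val d]/(nat_of_ord d) in hab *; lia.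
Qed.

Lemma descent n (w : 'S_n) (a b : 'I_n) : val b = (val a).+1 ->
  (((w^-1)%g b) < ((w^-1)%g a))%N ->
  (plength n (w * tperm a b)%g < plength n w)%N.
Proof.
move=> hab hlt; have hab' : nat_of_ord b = (nat_of_ord a).+1 := hab.
rewrite /plength; apply: proper_card.
apply/properP; split.
  apply/subsetP=> [[x y]]; rewrite !inE /= !permM => /andP[xy].
  case/(@tperm_lt _ _ _ _ _ hab) => [->|[ea eb]]; first by rewrite xy.
  move: xy; rewrite -(permK w x) -(permK w y) ea eb; lia.
exists ((w^-1)%g b, (w^-1)%g a); rewrite !inE /= ?permM !permKV hlt /=.
  lia.
by rewrite tpermL tpermR; lia.
Qed.

Definition posf (n P Q v : nat) : nat :=
  (if (v.+1 < P) then n.-1 - v else if (v.+1 < Q) then v.+1 - P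
  else if v.+1 == Q then n - P else v - P)%N.

Definition PosP n P Q (w : 'S_n) := forall v : 'I_n, nat_of_ord ((w^-1)%g v) = posf n P Q v.

Lemma Pos_step n P Q (w : 'S_n) : (1 <= P <= Q)%N -> (Q < n)%N -> PosP n P Q w ->
  (plength n (Defs.pcomp n (sref n Q) w) < plength n w)%N /\ PosP n P Q.+1 (Defs.pcomp n (sref n Q) w).
Proof.
move=> /andP[h1 h2] h3 hP.
have [a [b [ha hb ->]]] : exists a b : 'I_n, [/\ val a = Q.-1, val b = Q & sref n Q = tperm a b].
  rewrite /sref.
  have ha : (Q.-1 < n)%N by lia.
  rewrite (insubT (fun k => k < n)%N ha) (insubT (fun k => k < n)%N h3) /=.
  by exists (Sub Q.-1 ha), (Sub Q h3).
have ha' : nat_of_ord a = Q.-1 := ha.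
have hb' : nat_of_ord b = Q := hb.
rewrite /Defs.pcomp; split.
  apply: descent; first by rewrite hb ha; lia.
  rewrite !hP /posf ha' hb'.
  do ! case: ifP; lia.
move=> v; rewrite invMg permM tpermV hP /posf.
case: tpermP => [->|->|va vb]; rewrite ?ha' ?hb'.
- do ! case: ifP; try lia.
- do ! case: ifP; try lia.
- have va' : nat_of_ord v != Q.-1 by apply/eqP=> e; apply: va; apply: val_inj; rewrite /= ha' e.
  have vb' : nat_of_ord v != Q by apply/eqP=> e; apply: vb; apply: val_inj; rewrite /= hb' e.
  move: va' vb'; do ! case: ifP; lia.
Qed.

Lemma PosP_wlong n : PosP n n n (wlong n).
Proof.
move=> v.
have e : wlong n (rev_ord v) = v by rewrite /wlong permE rev_ordK.
rewrite -{1}e permK /posf /=. have := ltn_ord v.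
do ! case: ifP; lia.
Qed.

Lemma PosP_next n P (w : 'S_n) : (2 <= P)%N -> PosP n P n w -> PosP n P.-1 P.-1 w.
Proof.
move=> hP hw v; rewrite hw /posf.
have := ltn_ord v.
do ! case: ifP; lia.
Qed.

Lemma cox_gen n k : forall j, (1 <= j)%N -> (j + k = n)%N -> forall x : 'I_n,
  nat_of_ord (foldr (fun i acc => Defs.pcomp n (sref n i) acc) 1%g (iota j k) x) =
  (if (x.+1 < j)%N then nat_of_ord x else if (x.+1 < n)%N then x.+1 else j.-1).
Proof.
elim: k => [|k IH] j hj hjk x.
  rewrite /= perm1; have := ltn_ord x; do ! case: ifP; lia.
rewrite /= /Defs.pcomp permM.
have [a [b [ha hb ->]]] : exists a b : 'I_n, [/\ val a = j.-1, val b = j & sref n j = tperm a b].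
  rewrite /sref.
  have ha : (j.-1 < n)%N by lia.
  have hb : (j < n)%N by lia.
  rewrite (insubT (fun k => k < n)%N ha) (insubT (fun k => k < n)%N hb) /=.
  by exists (Sub j.-1 ha), (Sub j hb).
have ha' : nat_of_ord a = j.-1 := ha.
have hb' : nat_of_ord b = j := hb.
have IH' := IH j.+1 (ltn0Sn _) (etrans (addSnnS _ _) hjk) x.
case: tpermP => [e|e|e1 e2].
- have e' := congr1 (@nat_of_ord n) e; move: IH'; rewrite e' hb' ha'.
  have := ltn_ord x; do ! case: ifP; lia.
- have e' := congr1 (@nat_of_ord n) e; move: IH'; rewrite e' hb' ha'. have := ltn_ord x; do ! case: ifP; lia.
- have e1' : nat_of_ord (foldr (fun i acc => Defs.pcomp n (sref n i) acc) 1%g (iota j.+1 k) x) != j.-1.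
    by apply/eqP=> e; apply: e1; apply: val_inj; rewrite /= ha' e.
  have e2' : nat_of_ord (foldr (fun i acc => Defs.pcomp n (sref n i) acc) 1%g (iota j.+1 k) x) != j.
    by apply/eqP=> e; apply: e2; apply: val_inj; rewrite /= hb' e.
  move: e1' e2'; rewrite IH'.
  have := ltn_ord x; do ! case: ifP; lia.
Qed.

Lemma PosP_cox n (w : 'S_n) : (2 <= n)%N -> PosP n 2 n w -> w = cox n.
Proof.
move=> hn hw; apply/permP=> x.
have hc := @cox_gen n n.-1 1 (leqnn 1) ltac:(lia) x.
rewrite /cox.
apply/esym; apply: (canRL (permKV w)); apply: val_inj; rewrite /= hw /posf.
rewrite /= in hc; rewrite hc.
have := ltn_ord x; do ! case: ifP; lia.
Qed.

Set Implicit Arguments.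
Unset Strict Implicit.
Lemma msym_tpermX m (R : idomainType) (a b c : 'I_m) :
  msym (tperm a b) ('X_c : {mpoly R[m]}) = 'X_(tperm a b c).
Proof.
rewrite msymX tpermV; congr 'X_[_]; apply/mnmP=> i; rewrite !mnmE.
by rewrite (canF_eq (tpermK a b)).
Qed.

Lemma msymC m (R : idomainType) s (c : R) : msym s (c%:MP : {mpoly R[m]}) = c%:MP.
Proof. by rewrite -[c%:MP]mulr1 mul_mpolyC msymZ msym1. Qed.

Lemma Xv_X n k (h : (k < n + n)%N) : Xv n k = 'X_(Sub k h).
Proof. by rewrite /Xv (insubT (fun k => k < n + n)%N h). Qed.

Lemma eta_swapE n q : (1 <= q < n)%N ->
  exists A B : 'I_(n + n), [/\ val A = (n + q.-1)%N, val B = (n + q)%N & eta_swap_perm n q = tperm A B].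
Proof.
move=> /andP[h1 h2]; rewrite /eta_swap_perm.
have ha : (n + q.-1 < n + n)%N by lia.
have hb : (n + q < n + n)%N by lia.
rewrite (insubT (fun k => k < n + n)%N ha) (insubT (fun k => k < n + n)%N hb) /=.
by exists (Sub (n + q.-1)%N ha), (Sub (n + q)%N hb).
Qed.

Lemma s_eta_Xv n q k : (1 <= q < n)%N -> (k < n + n)%N -> k != (n + q.-1)%N -> k != (n + q)%N ->
  s_eta n q (Xv n k) = Xv n k.
Proof.
move=> hq hk h1 h2; rewrite /s_eta; have [A [B [hA hB ->]]] := eta_swapE hq.
rewrite (Xv_X hk) msym_tpermX tpermD //.
  by apply/eqP=> e; move: h1; rewrite -hA e /= eqxx.
by apply/eqP=> e; move: h2; rewrite -hB e /= eqxx.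
Qed.

Lemma s_eta_eta n q : (1 <= q < n)%N -> s_eta n q (etav n q) = etav n q.+1.
Proof.
move=> hq; rewrite /s_eta; have [A [B [hA hB ->]]] := eta_swapE hq.
have h1 : (n + q.-1 < n + n)%N by lia.
have h2 : (n + q < n + n)%N by lia.
rewrite /etav /= (Xv_X h1) (Xv_X h2) msym_tpermX.
have -> : (Sub (n + q.-1) h1 : 'I_(n+n)) = A by apply: val_inj.
by rewrite tpermL; congr 'X_(_); apply: val_inj.
Qed.

Lemma s_eta_eta1 n q : (1 <= q < n)%N -> s_eta n q (etav n q.+1) = etav n q.
Proof.
move=> hq; rewrite /s_eta; have [A [B [hA hB ->]]] := eta_swapE hq.
have h1 : (n + q.-1 < n + n)%N by lia.
have h2 : (n + q < n + n)%N by lia.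
rewrite /etav /= (Xv_X h1) (Xv_X h2) msym_tpermX.
have -> : (Sub (n + q) h2 : 'I_(n+n)) = B by apply: val_inj.
by rewrite tpermR; congr 'X_(_); apply: val_inj.
Qed.

Lemma s_eta_etaD n q j : (1 <= q < n)%N -> (1 <= j <= n)%N -> j != q -> j != q.+1 ->
  s_eta n q (etav n j) = etav n j.
Proof. move=> hq hj h1 h2; apply: s_eta_Xv => //; lia. Qed.

Lemma s_eta_zv n q j : (1 <= q < n)%N -> (1 <= j <= n)%N -> s_eta n q (zv n j) = zv n j.
Proof. move=> hq hj; apply: s_eta_Xv => //; lia. Qed.

Lemma s_eta_QP n q j : s_eta n q (QP n j) = QP n j.
Proof. exact: msymC. Qed.

Lemma X_neq0 m (R : idomainType) (a b : 'I_m) : a != b -> ('X_a - 'X_b : {mpoly R[m]}) != 0.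
Proof.
move=> ab; apply/eqP=> /(congr1 (mcoeff U_(a))).
by rewrite mcoeffB !mcoeffXU eqxx eq_sym (negbTE ab) mcoeff0 subr0 => /eqP; rewrite oner_eq0.
Qed.

Lemma oneX_neq0 m (R : idomainType) (a : 'I_m) : (1 - 'X_a : {mpoly R[m]}) != 0.
Proof.
apply/eqP=> /(congr1 (mcoeff U_(a))).
rewrite mcoeffB mcoeffXU eqxx mcoeff1 mcoeff0.
have -> : (U_(a)%MM == 0%MM) = false.
  apply/negbTE/eqP=> /mnmP /(_ a); rewrite mnm1E mnm0E eqxx //.
by rewrite sub0r => /eqP; rewrite oppr_eq0 oner_eq0.
Qed.

Lemma etaX n j (h : (1 <= j <= n)%N) : exists A : 'I_(n + n), val A = (n + j.-1)%N /\ etav n j = 'X_A.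
Proof.
have hh : (n + j.-1 < n + n)%N by lia.
by exists (Sub (n + j.-1)%N hh); rewrite /etav /= (Xv_X hh).
Qed.

Lemma eta_diff_neq0 n q : (1 <= q < n)%N -> etav n q.+1 - etav n q != 0.
Proof.
move=> hq; have [A [hA ->]] := @etaX n q.+1 ltac:(lia).
have [B [hB ->]] := @etaX n q ltac:(lia).
apply: X_neq0; apply/eqP=> /(congr1 val); rewrite hA hB /=; lia.
Qed.

Lemma one_eta_neq0 n q : (1 <= q <= n)%N -> 1 - etav n q != 0.
Proof. by move=> hq; have [A [hA ->]] := etaX hq; apply: oneX_neq0. Qed.

Definition DR n q (f g : Pring n) :=
  (s_eta n q f - f) * (1 - etav n q) = (g - f) * (etav n q.+1 - etav n q).

Lemma DQ_DR n q f g : (1 <= q < n)%N -> DQ n q f = toK g -> DR q f g.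
Proof.
move=> hq; rewrite /DQ /ominus /DR.
have h1 := eta_diff_neq0 hq.
have h1' : toK (etav n q.+1) - toK (etav n q) != 0.
  by rewrite /toK -tofracB tofrac_eq0.
move=> e.
have e2 : toK g - toK f = (toK (s_eta n q f) - toK f) * (1 - toK (etav n q)) / (toK (etav n q.+1) - toK (etav n q)).
 rewrite -e addrC addKr invf_div mulrA //.
apply/eqP; rewrite -tofrac_eq !tofracM !tofracB tofrac1 -/(toK _) -!/(toK _).
by rewrite e2 mulfVK.
Qed.


Lemma s_etaB n q : {morph s_eta n q : x y / x - y}.
Proof. by move=> x y; rewrite /s_eta msymB. Qed.
Lemma s_etaD n q : {morph s_eta n q : x y / x + y}.
Proof. by move=> x y; rewrite /s_eta msymD. Qed.
Lemma s_etaM n q : {morph s_eta n q : x y / x * y}.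
Proof. by move=> x y; rewrite /s_eta msymM. Qed.
Lemma s_eta1 n q : s_eta n q 1 = 1.
Proof. by rewrite /s_eta msym1. Qed.
Lemma s_eta0 n q : s_eta n q 0 = 0.
Proof. by rewrite /s_eta msym0. Qed.
Lemma s_etaX n q x k : s_eta n q (x ^+ k) = s_eta n q x ^+ k.
Proof. by elim: k => [|k IH]; rewrite ?expr0 ?s_eta1 // !exprS s_etaM IH. Qed.

Lemma DR_det n q (f g1 g2 : Pring n) : (1 <= q < n)%N -> DR q f g1 -> DR q f g2 -> g1 = g2.
Proof.
move=> hq; rewrite /DR => -> /(mulIf (eta_diff_neq0 hq)) e.
by apply: (addIr (- f)).
Qed.

Lemma lin_sub (R : comNzRingType) (s1 s2 f1 f2 g1 g2 c d : R) :
  (s1 - f1) * c = (g1 - f1) * d -> (s2 - f2) * c = (g2 - f2) * d ->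
  ((s1 - s2) - (f1 - f2)) * c = ((g1 - g2) - (f1 - f2)) * d.
Proof.
move=> e1 e2.
have E1 : ((s1 - s2) - (f1 - f2)) * c = (s1 - f1) * c - (s2 - f2) * c by ring.
have E2 : ((g1 - g2) - (f1 - f2)) * d = (g1 - f1) * d - (g2 - f2) * d by ring.
by rewrite E1 E2 e1 e2.
Qed.

Lemma lin_add (R : comNzRingType) (s1 s2 f1 f2 g1 g2 c d : R) :
  (s1 - f1) * c = (g1 - f1) * d -> (s2 - f2) * c = (g2 - f2) * d ->
  ((s1 + s2) - (f1 + f2)) * c = ((g1 + g2) - (f1 + f2)) * d.
Proof.
move=> e1 e2.
have E3 : ((s1 + s2) - (f1 + f2)) * c = (s1 - f1) * c + (s2 - f2) * c by ring.
have E4 : ((g1 + g2) - (f1 + f2)) * d = (g1 - f1) * d + (g2 - f2) * d by ring.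
by rewrite E3 E4 e1 e2.
Qed.

Lemma DR_sub n q (f1 f2 g1 g2 : Pring n) : DR q f1 g1 -> DR q f2 g2 -> DR q (f1 - f2) (g1 - g2).
Proof. by rewrite /DR s_etaB => e1 e2; apply: lin_sub e1 e2. Qed.

Lemma DR_add n q (f1 f2 g1 g2 : Pring n) : DR q f1 g1 -> DR q f2 g2 -> DR q (f1 + f2) (g1 + g2).
Proof. by rewrite /DR s_etaD => e1 e2; apply: lin_add e1 e2. Qed.

Lemma DR_mul n q (r f g : Pring n) : s_eta n q r = r -> DR q f g -> DR q (r * f) (r * g).
Proof.
rewrite /DR s_etaM => -> e.
by rewrite -!mulrBr -!mulrA e.
Qed.

Lemma DR_inv n q (r : Pring n) : s_eta n q r = r -> DR q r r.
Proof. by rewrite /DR => ->; rewrite !subrr !mul0r. Qed.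

Fixpoint chainR n (k p : nat) (f g : Pring n) : Prop :=
  match k with 0 => f = g | k'.+1 => exists h, DR p f h /\ chainR k' p.+1 h g end.

Definition InvR n p k (r : Pring n) := forall q, (p <= q < p + k)%N -> s_eta n q r = r.

Lemma chain_det n k : forall p (f g1 g2 : Pring n), (1 <= p)%N -> (p + k <= n)%N ->
  chainR k p f g1 -> chainR k p f g2 -> g1 = g2.
Proof.
elim: k => [|k IH] p f g1 g2 h1 h2 /=; first by move=> <- <-.
move=> [h [e1 c1]] [h' [e2 c2]].
have ehh : h = h' by apply: (DR_det _ e1 e2); lia.
subst h'.
by apply: (IH p.+1 h g1 g2 _ _ c1 c2); lia.
Qed.

Lemma chain_sub n k : forall p (f1 f2 g1 g2 : Pring n),
  chainR k p f1 g1 -> chainR k p f2 g2 -> chainR k p (f1 - f2) (g1 - g2).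
Proof.
elim: k => [|k IH] p f1 f2 g1 g2 /=; first by move=> -> ->.
move=> [h1 [e1 c1]] [h2 [e2 c2]]; exists (h1 - h2); split; first exact: DR_sub.
exact: IH.
Qed.

Lemma chain_add n k : forall p (f1 f2 g1 g2 : Pring n),
  chainR k p f1 g1 -> chainR k p f2 g2 -> chainR k p (f1 + f2) (g1 + g2).
Proof.
elim: k => [|k IH] p f1 f2 g1 g2 /=; first by move=> -> ->.
move=> [h1 [e1 c1]] [h2 [e2 c2]]; exists (h1 + h2); split; first exact: DR_add.
exact: IH.
Qed.

Lemma chain_mul n k : forall p (r f g : Pring n), InvR p k r ->
  chainR k p f g -> chainR k p (r * f) (r * g).
Proof.
elim: k => [|k IH] p r f g hr /=; first by move=> ->.
move=> [h [e c]]; exists (r * h); split.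
  by apply: DR_mul => //; apply: hr; lia.
by apply: IH => // q hq; apply: hr; lia.
Qed.

Lemma chain_inv n k : forall p (r : Pring n), InvR p k r -> chainR k p r r.
Proof.
elim: k => [|k IH] p r hr //=.
exists r; split; first by apply: DR_inv; apply: hr; lia.
by apply: IH => q hq; apply: hr; lia.
Qed.

Lemma chain_0 n k p : chainR k p (0 : Pring n) 0.
Proof. by apply: chain_inv => q _; rewrite s_eta0. Qed.

Lemma chain_sum n k p m (F G : 'I_m -> Pring n) :
  (forall i, chainR k p (F i) (G i)) -> chainR k p (\sum_(i < m) F i) (\sum_(i < m) G i).
Proof.
elim: m F G => [|m IH] F G h; first by rewrite !big_ord0; apply: chain_0.
rewrite !big_ord_recr /=; apply: chain_add; last exact: h.
by apply: IH.
Qed.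


Lemma pow_aux (T : comNzRingType) (e e' R : T) a :
 ((1 - e')^+a.+1 * R - (1 - e)^+a.+1 * R) * (1 - e) =
 (((1 - e)^+a.+1 * R - \sum_(i < a.+1) (1 - e')^+i * ((1 - e) * (1 - e)^+(a - i) * R)) - (1 - e)^+a.+1 * R) * (e' - e).
Proof.
have E := subrXX (1 - e) (1 - e') a.+1.
have Hs : \sum_(i < a.+1) (1 - e')^+i * ((1 - e) * (1 - e)^+(a - i) * R) =
   (1 - e) * R * \sum_(i < a.+1) (1 - e) ^+ (a.+1.-1 - i) * (1 - e') ^+ i.
  rewrite mulr_sumr; apply: eq_bigr => i _ /=.
  move: ((1 - e') ^+ i) ((1 - e) ^+ (a - i)) => u v; ring.
rewrite Hs.
move: E; move: (\sum_(i < a.+1) (1 - e) ^+ (a.+1.-1 - i) * (1 - e') ^+ i) => S.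
move: ((1 - e) ^+ a.+1) ((1 - e') ^+ a.+1) => X Y E.
have -> : (Y * R - X * R) * (1 - e) = - ((1 - e) * R * (X - Y)) by ring.
rewrite E; ring.
Qed.

Lemma inv_onem n p q : (1 <= p <= n)%N -> (1 <= q < n)%N -> p != q -> p != q.+1 ->
  s_eta n q (1 - etav n p) = 1 - etav n p.
Proof. by move=> hp hq h1 h2; rewrite s_etaB s_eta1 s_eta_etaD. Qed.

Lemma chain_pow n k : forall p a (R : Pring n), (1 <= p)%N -> (p + k <= n)%N ->
  (1 <= a <= k)%N -> InvR p k R -> chainR k p ((1 - etav n p) ^+ a * R) 0.
Proof.
elim: k => [|k IH] p a R hp hpk ha hR; first lia.
case: a ha => [|a] ha; first lia.
have hRp : s_eta n p R = R by apply: hR; lia.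
pose h := (1 - etav n p)^+a.+1 * R -
   \sum_(i < a.+1) (1 - etav n p.+1)^+i * ((1 - etav n p) * (1 - etav n p)^+(a - i) * R).
exists h; split.
  rewrite /DR s_etaM s_etaX s_etaB s_eta1 s_eta_eta; last lia.
  by rewrite hRp pow_aux.
have hx : forall q, (p.+1 <= q < p.+1 + k)%N -> s_eta n q (1 - etav n p) = 1 - etav n p.
  move=> q hq; apply: inv_onem; lia.
have hR' : InvR p.+1 k R by move=> q hq; apply: hR; lia.
have C : chainR k p.+1 h ((1 - etav n p)^+a.+1 * R -
   ((1 - etav n p)^+a.+1 * R + \sum_(j < a) 0)).
  apply: chain_sub.
    apply: chain_inv => q hq; rewrite s_etaM s_etaX hx // hR' //.
  rewrite big_ord_recl /= expr0 mul1r subn0 -exprS.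
  apply: chain_add.
    apply: chain_inv => q hq; rewrite s_etaM s_etaX hx // hR' //.
  apply: chain_sum => j /=.
  apply: IH; [lia|lia| |].
    by have := ltn_ord j; rewrite /bump /=; lia.
  move=> q hq; rewrite !s_etaM s_etaX hx // hR' //.
by move: C; rewrite big1 // addr0 subrr.
Qed.


Lemma s_eta_sum n q I (r : seq I) (P : pred I) (F : I -> Pring n) :
  s_eta n q (\sum_(i <- r | P i) F i) = \sum_(i <- r | P i) s_eta n q (F i).
Proof. by rewrite /s_eta rmorph_sum. Qed.

Lemma s_eta_prod n q I (r : seq I) (P : pred I) (F : I -> Pring n) :
  s_eta n q (\prod_(i <- r | P i) F i) = \prod_(i <- r | P i) s_eta n q (F i).
Proof. by rewrite /s_eta rmorph_prod. Qed.

Lemma s_etaN1 n q : s_eta n q (-1) = -1.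
Proof. by rewrite /s_eta msymN msym1. Qed.

Lemma Fpol_inv n q i m : (1 <= q < n)%N -> (i <= n)%N -> s_eta n q (Fpol n i m) = Fpol n i m.
Proof.
move=> hq hi; rewrite /Fpol s_eta_sum; apply: eq_bigr => J _.
rewrite s_etaM !s_eta_prod; congr (_ * _); apply: eq_bigr => a _.
  by rewrite s_etaB s_eta1 s_eta_QP.
by rewrite s_eta_zv // ; apply/andP; split => //; apply: leq_trans (ltn_ord a) hi.
Qed.

Lemma Fpol0 n i : Fpol n i 0 = 1.
Proof.
rewrite /Fpol (bigD1 set0) ?cards0 //=.
rewrite [X in _ + X]big1 ?addr0; last first.
  by move=> J /andP[/eqP hJ hJ0]; move: hJ0; rewrite -cards_eq0 hJ.
by rewrite !big_pred0 ?mulr1 // => a; rewrite in_set0.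
Qed.

Lemma psi_inv n i q : (1 <= i < n)%N -> (1 <= q < n)%N -> (n - i != q)%N -> (n - i != q.+1)%N ->
  s_eta n q (psi n i) = psi n i.
Proof.
move=> hi hq h1 h2; rewrite /psi s_eta_sum; apply: eq_bigr => j _.
rewrite !s_etaM !s_etaX s_etaN1 Fpol_inv ?inv_onem //; lia.
Qed.

Lemma chain_psi n k (R : Pring n) : (1 <= k)%N -> (k < n)%N -> InvR (n - k) k R ->
  chainR k (n - k) (psi n k * R) R.
Proof.
move=> hk hkn hR.
have -> : psi n k * R = \sum_(j < k.+1) (1 - etav n (n - k)) ^+ j * ((-1) ^+ j * Fpol n k j * R).
  rewrite /psi big_mkord mulr_suml; apply: eq_bigr => j _.
  move: ((-1) ^+ j) ((1 - etav n (n - k)) ^+ j) (Fpol n k j) => u v w; ring.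
rewrite big_ord_recl /= expr0 !mul1r Fpol0 mul1r.
set F := (X in chainR _ _ (_ + X) _).
suff : chainR k (n - k) (R + F) (R + \sum_(j < k) 0) by rewrite big1 // addr0.
rewrite /F.
apply: chain_add; first exact: chain_inv.
apply: chain_sum => j; apply: chain_pow; try lia.
  by have := ltn_ord j; rewrite /bump /=; lia.
move=> q hq; rewrite !s_etaM Fpol_inv ?hR //; try lia.
by rewrite s_etaX s_etaN1.
Qed.


Lemma G_block n (G : 'S_n -> Pring n) P : is_QDGroth n G -> forall k Q (w : 'S_n),
  (2 <= P <= Q)%N -> (Q + k = n)%N -> PosP n P Q w ->
  exists w', PosP n P n w' /\ chainR k Q (G w) (G w').
Proof.
move=> hG; elim=> [|k IH] Q w hPQ hQk hw.
  exists w; split => // v; rewrite hw; congr posf; lia.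
have [hd hw1] := @Pos_step n P Q w ltac:(lia) ltac:(lia) hw.
have hD := (hG.2 Q ltac:(lia) w).1 hd.
have hDR : DR Q (G w) (G (Defs.pcomp n (sref n Q) w)) by apply: DQ_DR hD; lia.
have [w' [h1 h2]] := IH Q.+1 _ ltac:(lia) ltac:(lia) hw1.
by exists w'; split => //=; exists (G (Defs.pcomp n (sref n Q) w)).
Qed.

Lemma claim n (G : 'S_n -> Pring n) : (2 <= n)%N -> is_QDGroth n G -> forall d, (d <= n - 2)%N ->
  exists w, PosP n (n - d) n w /\ G w = \prod_(d.+1 <= i < n) psi n i.
Proof.
move=> hn hG; elim=> [|d IH] hd.
  exists (wlong n); split; first by rewrite subn0; apply: PosP_wlong.
  by rewrite hG.1.
have [w [hw hGw]] := IH ltac:(lia).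
have hw2 : PosP n (n - d.+1) (n - d.+1) w.
  have := @PosP_next n (n - d) w ltac:(lia) hw; have -> : (n - d).-1 = (n - d.+1)%N by lia.
  done.
have [w' [hw' hc]] := @G_block n G (n - d.+1) hG d.+1 (n - d.+1) w ltac:(lia) ltac:(lia) hw2.
exists w'; split => //.
set R := \prod_(d.+2 <= i < n) psi n i.
have hR : InvR (n - d.+1) d.+1 R.
  move=> q hq; rewrite /R s_eta_prod; apply: eq_big_nat => i hi.
  apply: psi_inv; lia.
have hcp := @chain_psi n d.+1 R ltac:(lia) ltac:(lia) hR.
rewrite hGw (big_ltn (ltac:(lia) : (d.+1 < n)%N)) in hc.
by apply: (chain_det _ _ hc hcp); lia.
Qed.

Unset Implicit Arguments.
Theorem corollary5p3 (n : nat) (hn : (2 <= n)%N) (G : 'S_n -> Pring n) :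
  is_QDGroth n G ->
  G (cox n) =
    \sum_(0 <= j < n) (-1) ^+ j * (1 - etav n 1) ^+ j * Fpol n n.-1 j.
Proof.
move=> hG.
have [w [hw hGw]] := claim hn hG (leqnn (n - 2)).
have hw2 : PosP n 2 n w by move: hw; have -> : (n - (n - 2))%N = 2 by lia.
rewrite -(@PosP_cox n w hn hw2) hGw.
have -> : (n - 2).+1 = n.-1 by lia.
rewrite big_ltn; last lia.
rewrite big_geq; last lia.
rewrite mulr1 /psi.
have -> : (n - n.-1)%N = 1%N by lia.
by rewrite prednK //; lia.
Qed.
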